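(* Let $a_i<b_i$ ($i=1,\dots,n$) be real numbers and let $u:\prod_{i=1}^n[a_i,b_i]\to[0,\infty]$ be a convex function. Then for every $x=(x_1,\dots,x_n)$ in the open box $\prod_{i=1}^n(a_i,b_i)$, \[ u(x)\le \int_{\prod_{i=1}^n[a_i,b_i]}u\,d\mathbf{x}\cdot\frac{1}{\prod_{i=1}^n\min\{x_i-a_i,\;b_i-x_i\}}, \] where $d\mathbf{x}$ denotes the $n$-dimensional Lebesgue measure. (At boundary points of the box the right-hand side is $+\infty$ and the inequality is trivial.)
   Context: A convex function with values in $[0,\infty]$ means $u((1-t)x+ty)\le(1-t)u(x)+tu(y)$ for all $x,y$ and $t\in[0,1]$, with the usual conventions for $+\infty$. *)

(* Defs.v *)
From HB Require Import structures.
From mathcomp Require Import all_boot all_order all_algebra.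
From mathcomp Require Import all_classical all_reals all_analysis.
Set Implicit Arguments. Unset Strict Implicit. Unset Printing Implicit Defensive.
Import Order.TTheory GRing.Theory Num.Theory.
Local Open Scope classical_set_scope.
Local Open Scope ring_scope.

(* Points of R^n are represented as n.-tuples of reals; n.-tuple R carries
   the library's product (Borel) sigma-algebra (measurable_tuple). *)

(* n-dimensional Lebesgue measure, defined as the iterated product of the
   one-dimensional Lebesgue measure (product_measure1 construction, first
   coordinate integrated outermost):
     lebn 0 A      = 1 if the empty tuple is in A, 0 otherwise
     lebn (n+1) A  = \int_R lebn n (section of A at the first coordinate x) dx *)
Fixpoint lebn (R : realType) (n : nat) : set (n.-tuple R) -> \bar R :=
  match n as m return set (m.-tuple R) -> \bar R with
  | 0 => fun A => ((\1_A [tuple]) : R)%:E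
  | m.+1 => fun A =>
      (\int[@lebesgue_measure R]_x
          @lebn R m [set y : m.-tuple R | A [tuple of x :: y]])%E
  end.

Definition tcomb (R : realType) (n : nat) (t : R) (x y : n.-tuple R)
  : n.-tuple R :=
  [tuple (1 - t) * tnth x i + t * tnth y i | i < n].

Definition cbox (R : realType) (n : nat) (a b : 'I_n -> R) : set (n.-tuple R) :=
  [set x | forall i : 'I_n, a i <= tnth x i <= b i].
Definition obox (R : realType) (n : nat) (a b : 'I_n -> R) : set (n.-tuple R) :=
  [set x | forall i : 'I_n, a i < tnth x i < b i].

(* u : D -> [0, +oo] convex on the convex set D, with the usual conventions
   for +oo (in \bar R, 0 * +oo = 0). *)
Definition convex_on_ext (R : realType) (n : nat) (D : set (n.-tuple R))
  (u : n.-tuple R -> \bar R) : Prop :=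
  forall x y, D x -> D y -> forall t : R, 0 <= t <= 1 ->
    (u (tcomb t x y) <= (1 - t)%:E * u x + t%:E * u y)%E.

(* Main.v *)
Require Import Defs.
From HB Require Import structures.
From mathcomp Require Import all_boot all_order all_algebra.
From mathcomp Require Import all_classical all_reals all_analysis.
Import Order.TTheory GRing.Theory Num.Theory.
Local Open Scope classical_set_scope.
Local Open Scope ring_scope.
From mathcomp Require Import ring lra.

Section S.
Variable R : realType.

Lemma tnth_tcomb n t (x y : n.-tuple R) i :
  tnth (tcomb t x y) i = (1 - t) * tnth x i + t * tnth y i.
Proof. by rewrite /tcomb tnth_mktuple. Qed.

Lemma tcomb_cons n t (a b : R) (x y : n.-tuple R) :
  tcomb t [tuple of a :: x] [tuple of b :: y] = [tuple of ((1-t)*a + t*b) :: tcomb t x y].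
Proof.
apply: eq_from_tnth => i; case: (unliftP ord0 i) => [j ->|->].
  by rewrite tnth_tcomb !tnthS tnth_tcomb.
by rewrite tnth_tcomb !tnth0.
Qed.

Lemma tcomb_same n t (x : n.-tuple R) : tcomb t x x = x.
Proof. by apply: eq_from_tnth => i; rewrite tnth_tcomb -mulrDl subrK mul1r. Qed.

Lemma orthant n (K : set (n.-tuple R)) (x : n.-tuple R) :
  (forall y z t, K y -> K z -> 0 <= t <= 1 -> K (tcomb t y z)) -> ~ K x ->
  exists s : n.-tuple bool, forall y,
    (forall i, if tnth s i then tnth x i < tnth y i else tnth y i < tnth x i) -> ~ K y.
Proof.
elim: n K x => [|n IH] K x Kc Kx.
  by exists [tuple] => y _; rewrite (tuple0 y) -(tuple0 x).
case/tupleP: x Kx => x0 x' Kx.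
pose A := [set z : n.-tuple R | exists t, x0 < t /\ K [tuple of t :: z]].
pose B := [set z : n.-tuple R | exists t, t < x0 /\ K [tuple of t :: z]].
have cA : forall y z t, A y -> A z -> 0 <= t <= 1 -> A (tcomb t y z).
  move=> y z l [t1 [h1 K1]] [t2 [h2 K2]] /andP[l0 l1].
  exists ((1-l)*t1 + l*t2); split; last by rewrite -tcomb_cons; apply: Kc => //; apply/andP.
  set c := Num.min t1 t2.
  have c1 : c <= t1 by rewrite /c ge_min lexx.
  have c2 : c <= t2 by rewrite /c ge_min lexx orbT.
  have hc : x0 < c by rewrite /c lt_min h1 h2.
  have q1 : 0 <= (1-l)*(t1 - c) by apply: mulr_ge0; lra.
  have q2 : 0 <= l*(t2 - c) by apply: mulr_ge0; lra.
  nra.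
have cB : forall y z t, B y -> B z -> 0 <= t <= 1 -> B (tcomb t y z).
  move=> y z l [t1 [h1 K1]] [t2 [h2 K2]] /andP[l0 l1].
  exists ((1-l)*t1 + l*t2); split; last by rewrite -tcomb_cons; apply: Kc => //; apply/andP.
  set c := Num.max t1 t2.
  have c1 : t1 <= c by rewrite /c le_max lexx.
  have c2 : t2 <= c by rewrite /c le_max lexx orbT.
  have hc : c < x0 by rewrite /c gt_max h1 h2.
  have q1 : 0 <= (1-l)*(c - t1) by apply: mulr_ge0; lra.
  have q2 : 0 <= l*(c - t2) by apply: mulr_ge0; lra.
  nra.
have : ~ A x' \/ ~ B x'.
  case: (pselect (A x')) => [[t1 [h1 K1]]|]; last by left.
  right => -[t2 [h2 K2]]; apply: Kx.
  have d0 : 0 < t1 - t2 by lra.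
  set l := (t1 - x0) / (t1 - t2).
  have l01 : 0 <= l <= 1.
    apply/andP; split; first by rewrite /l divr_ge0 //; lra.
    by rewrite /l ler_pdivrMr // mul1r; lra.
  have := Kc _ _ l K1 K2 l01; rewrite tcomb_cons tcomb_same.
  have -> // : (1-l)*t1 + l*t2 = x0.
  rewrite /l; field; lra.
case => [nA|nB].
  have [s' Hs'] := IH A x' cA nA; exists [tuple of true :: s'] => y.
  case/tupleP: y => y0 y' H Ky.
  have h0 := H ord0; rewrite !tnth0 /= in h0.
  apply: (Hs' y') => [i|]; first by have := H (lift ord0 i); rewrite !tnthS.
  by exists y0.
have [s' Hs'] := IH B x' cB nB; exists [tuple of false :: s'] => y.
case/tupleP: y => y0 y' H Ky.
have h0 := H ord0; rewrite !tnth0 /= in h0.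
apply: (Hs' y') => [i|]; first by have := H (lift ord0 i); rewrite !tnthS.
by exists y0.
Qed.

Local Open Scope ereal_scope.
Lemma lebn_set0 n : lebn (set0 : set (n.-tuple R)) = 0.
Proof.
elim: n => [|n IH] /=; first by rewrite indicE in_set0.
rewrite (_ : [set y | _] = set0); last by apply/seteqP; split.
rewrite IH. exact: integral0.
Qed.

Import HBNNSimple.

Lemma sint0 n (h : {nnsfun (n.-tuple R) >-> R}) : (forall x, h x = 0%R) ->
  sintegral (@lebn R n) h = 0.
Proof.
move=> h0; rewrite /sintegral; apply: fsbig1 => r _.
have [->|r0] := eqVneq r 0%R; first by rewrite mul0e.
rewrite (_ : h @^-1` [set r] = set0) ?lebn_set0 ?mule0//.
by apply/seteqP; split => // x /=; rewrite h0 => /esym/eqP; rewrite (negbTE r0).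
Qed.

Lemma sint_ind n (S : set (n.-tuple R)) (mS : measurable S) c (c0 : (0 <= c)%R) :
  sintegral (@lebn R n) (scale_nnsfun (indic_nnsfun R mS) c0) = c%:E * lebn S.
Proof.
rewrite /sintegral -(fsbig_widen [set c]) //; last first.
  move=> r [_ /= rc]; rewrite /=.
  have [->|r0] := eqVneq r 0%R; first by rewrite mul0e.
  rewrite (_ : _ @^-1` [set r] = set0) ?lebn_set0 ?mule0//.
  apply/seteqP; split => // x /=. rewrite measurable_realfun.mindicE.
  case: (x \in S); rewrite ?mulr1 ?mulr0 => /esym/eqP.
    by move: rc => /eqP; rewrite eq_sym => /negbTE ->.
  by rewrite (negbTE r0).
rewrite fsbig_set1.
have [c00|c0'] := eqVneq c 0%R.
  have -> : c%:E = 0 by rewrite c00.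
  by rewrite !mul0e.
congr (_ * lebn _); apply/seteqP; split => x /=; rewrite measurable_realfun.mindicE.
  by case: (boolP (x \in S)) => [/set_mem//|_]; rewrite mulr0 => /esym/eqP; rewrite (negbTE c0').
by move=> /mem_set ->; rewrite mulr1.
Qed.

Lemma LB n (D : set (n.-tuple R)) (u : n.-tuple R -> \bar R) (S : set (n.-tuple R))
  (mS : measurable S) (c : R) (c0 : (0 <= c)%R) :
  (forall y, D y -> 0 <= u y) -> S `<=` D -> (forall y, S y -> c%:E <= u y) ->
  c%:E * lebn S <= \int[@lebn R n]_(y in D) u y.
Proof.
move=> u0 SD Su; rewrite /integral /=.
have g0 : forall x, setT x -> 0 <= (u \_ D) x.
  by move=> x _; rewrite /patch; case: ifPn => [/set_mem/u0//|_].
set s2 := (X in _ - X).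
have -> : s2 = 0.
  apply/eqP; rewrite eq_le; apply/andP; split.
    apply: ge_ereal_sup => _ [h /= hle <-]; rewrite sint0// => x.
    apply/eqP; rewrite eq_le fun_ge0 andbT -lee_fin; apply: le_trans (hle x) _.
    rewrite le_eqVlt; apply/orP; left; apply/eqP.
    exact: (ge0_funenegE g0 (in_setT x)).
  apply: ereal_sup_ubound; exists nnsfun0; last by rewrite sint0.
  move=> x /=; exact: funeneg_ge0.
rewrite sube0; apply: ereal_sup_ubound; exists (scale_nnsfun (indic_nnsfun R mS) c0); last first.
  exact: sint_ind.
move=> x /=; rewrite measurable_realfun.mindicE; case: (boolP (x \in S)) => [/set_mem Sx|_].
  rewrite mulr1 (ge0_funeposE g0 (in_setT x)) /patch mem_set; last exact: SD.
  exact: Su.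
by rewrite mulr0; exact: funepos_ge0.
Qed.
Definition sbox n (lo hi : 'I_n -> R) : set (n.-tuple R) :=
  [set y | forall i, (lo i < tnth y i < hi i)%R].

Arguments sbox {n}.
Lemma sbox_measurable n (lo hi : 'I_n -> R) : measurable (sbox lo hi).
Proof.
have -> : sbox lo hi = \bigcap_(i in [set: 'I_n]) ([set: n.-tuple R] `&` (fun y => tnth y i) @^-1` (`]lo i, hi i[%classic)).
  apply/seteqP; split => y /=.
    by move=> H i _; split => //=; rewrite in_itv /= H.
  by move=> H i; have [_ /=] := H i I; rewrite in_itv.
apply: fin_bigcap_measurable; first exact: finite_finset.
move=> i _; apply: (measurable_tnth i) => //; exact: measurable_itv.
Qed.

Lemma lebn_sbox n (lo hi : 'I_n -> R) : (forall i, lo i <= hi i)%R ->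
  lebn (sbox lo hi) = (\prod_(i < n) (hi i - lo i))%:E.
Proof.
elim: n lo hi => [|n IH] lo hi lh /=.
  by rewrite big_ord0 indicE mem_set // => -[].
set lo' := fun i => lo (lift ord0 i); set hi' := fun i => hi (lift ord0 i).
set V := (\prod_(i < n) (hi' i - lo' i))%R.
have E : forall x : R, lebn [set y : n.-tuple R | sbox lo hi [tuple of x :: y]] =
    ((fun _ => V%:E) \_ `]lo ord0, hi ord0[%classic) x.
  move=> x; rewrite /patch; case: ifPn => [|xI].
    rewrite inE /= in_itv /= => xI.
    rewrite -(IH lo' hi'); last by move=> i; exact: lh.
    congr lebn; apply/seteqP; split => y /=.
      by move=> H i; have := H (lift ord0 i); rewrite tnthS.
    move=> H i; case: (unliftP ord0 i) => [j ->|->]; first by rewrite tnthS; exact: H.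
    by rewrite tnth0.
  rewrite (_ : [set y | _] = set0) ?lebn_set0//.
  apply/seteqP; split => // y /= H; move: xI; have := H ord0; rewrite tnth0 => h.
  by move/negP; apply; rewrite inE /= in_itv /= h.
under eq_integral => x _ do rewrite E.
rewrite -integral_mkcond integral_cst; last exact: measurable_itv.
set m := (X in V%:E * X).
have -> : m = (if (lo ord0 < hi ord0)%R then (hi ord0)%:E - (lo ord0)%:E else 0) by exact: (lebesgue_measure_itv `]lo ord0, hi ord0[).
rewrite big_ord_recl.
have := lh ord0; rewrite le_eqVlt => /orP[/eqP ->|lt]; first by rewrite ltxx subrr mul0r mule0.
by rewrite lt -EFinB -EFinM mulrC.
Qed.
End S.

Theorem mainTheorem1 (R : realType) (n : nat) (a b : 'I_n -> R)
  (u : n.-tuple R -> \bar R) :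
  (forall i, a i < b i) ->
  (forall x, cbox a b x -> (0 <= u x)%E) ->
  convex_on_ext (cbox a b) u ->
  forall x, obox a b x ->
    (u x <= (\int[lebn (n := n)]_(y in cbox a b) u y) *
            ((\prod_(i < n) Num.min (tnth x i - a i) (b i - tnth x i))^-1)%:E)%E.
Proof.
move=> ab u0 cu x xo.
set r := fun i => Num.min (tnth x i - a i) (b i - tnth x i).
have -> : \prod_(i < n) Num.min (tnth x i - a i) (b i - tnth x i) = \prod_(i < n) r i by [].
set P := \prod_(i < n) r i.
set I := (\int[lebn (n := n)]_(y in cbox a b) u y)%E.
have r0 : forall i, 0 < r i.
  by move=> i; have /andP[h1 h2] := xo i; rewrite /r lt_min !subr_gt0 h1 h2.
have P0 : 0 < P by apply: prodr_gt0 => i _.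
have xc : cbox a b x by move=> i; have /andP[h1 h2] := xo i; rewrite !ltW.
have key : forall c : R, 0 <= c -> (c%:E < u x)%E -> (c%:E * P%:E <= I)%E.
  move=> c c0 cux.
  pose K := [set y | cbox a b y /\ (u y <= c%:E)%E].
  have Kc : forall y z t, K y -> K z -> 0 <= t <= 1 -> K (tcomb t y z).
    move=> y z t [cy uy] [cz uz] t01; split.
      move=> i; rewrite tnth_tcomb; move/andP: t01 => [t0 t1].
      have /andP[y1 y2] := cy i; have /andP[z1 z2] := cz i.
      have q1 : 0 <= (1 - t) * (tnth y i - a i) by apply: mulr_ge0; lra.
      have q2 : 0 <= t * (tnth z i - a i) by apply: mulr_ge0; lra.
      have q3 : 0 <= (1 - t) * (b i - tnth y i) by apply: mulr_ge0; lra.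
      have q4 : 0 <= t * (b i - tnth z i) by apply: mulr_ge0; lra.
      apply/andP; split; nra.
    apply: le_trans (cu y z cy cz t t01) _.
    move/andP: t01 => [t0 t1].
    have -> : c%:E = ((1 - t)%:E * c%:E + t%:E * c%:E)%E.
      by rewrite -!EFinM -EFinD -mulrDl subrK mul1r.
    apply: leeD; apply: lee_wpmul2l => //; rewrite lee_fin; lra.
  have nKx : ~ K x by case=> _ h; move: cux; rewrite ltNge h.
  have [s Hs] := @orthant R n K x Kc nKx.
  pose lo := fun i => if tnth s i then tnth x i else tnth x i - r i.
  pose hi := fun i => if tnth s i then tnth x i + r i else tnth x i.
  have lh : forall i, lo i <= hi i.
    by move=> i; have := r0 i; rewrite /lo /hi; case: (tnth s i) => ?; lra.
  have rb : forall i, r i <= tnth x i - a i /\ r i <= b i - tnth x i.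
    by move=> i; split; rewrite /r ge_min lexx ?orbT.
  have SD : @sbox R n lo hi `<=` cbox a b.
    move=> y Hy i; have := Hy i; have [h1 h2] := rb i; rewrite /lo /hi.
    by case: (tnth s i) => /andP[? ?]; apply/andP; split; lra.
  have Su : forall y, @sbox R n lo hi y -> (c%:E <= u y)%E.
    move=> y Hy; have cy := SD _ Hy; rewrite leNgt; apply/negP => uy.
    apply: (Hs y); last by split => //; exact: ltW.
    move=> i; have := Hy i; rewrite /lo /hi.
    by case: (tnth s i) => /andP[? ?]; lra.
  have := @LB R n (cbox a b) u _ (@sbox_measurable R n lo hi) c c0 u0 SD Su; rewrite lebn_sbox //.
  have -> // : \prod_(i < n) (hi i - lo i) = P.
  by apply: eq_bigr => i _; rewrite /hi /lo; case: (tnth s i); ring.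
have I0 : (0 <= I)%E.
  have := @LB R n (cbox a b) u set0 measurable0 0 (lexx _) u0 (sub0set _) (fun y (h : set0 y) => match h with end).
  by rewrite mul0e.
have ux0 := u0 x xc.
case E : (u x) ux0 key => [v| |] // v0 key.
  case EI : I I0 key => [i| |] // i0 key.
    rewrite -EFinM lee_fin leNgt; apply/negP => h.
    have iP0 : 0 <= i / P by apply: divr_ge0 => //; exact: ltW.
    have := key ((i / P + v) / 2); rewrite -EFinM lee_fin lte_fin.
    have hc : i / P < (i / P + v) / 2 by lra.
    rewrite ltr_pdivrMr // in hc.
    move=> /(_ _ _)/=; move=> H; have := H ltac:(lra) ltac:(lra); lra.
  by rewrite gt0_mulye ?leey // lte_fin invr_gt0.
case EI : I I0 key => [i| |] // i0 key.
  rewrite lee_fin in i0.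
  have c0 : 0 <= (i + 1) / P by apply: divr_ge0; lra.
  have := key _ c0 (ltry _).
  by rewrite -EFinM lee_fin divfK ?gt_eqF // => h; exfalso; lra.
by rewrite gt0_mulye ?leey // lte_fin invr_gt0.
Qed.
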